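(* Let $T\ge2$, and let $\mathscr Q^{\mathrm{VC}}$ be the mixture probability assignment built from $g_1,\dots,g_{m_\epsilon}\in\mathcal G$. For every $x_{1:T}\in\mathcal X^T$, $y_{1:T}\in\{0,1\}^T$, $g^*\in\mathcal G$ and $\theta_0^*,\theta_1^*\in[0,1]$, $$\log\frac{p_{g^*,\theta_0^*,\theta_1^*}(y_{1:T}\mid x_{1:T})}{q(y_{1:T}\|x_{1:T})}\le\log m_\epsilon+2\log T+32\,\min_{i\in[m_\epsilon]}d_H\big(g^*(x_{1:T}),g_i(x_{1:T})\big)\log T,$$ where $g(x_{1:T})=(g(x_1),\dots,g(x_T))\in\{0,1\}^T$ and $d_H$ is Hamming distance.
   Context: $\mathcal G\subseteq\{\mathcal X\to\{0,1\}\}$ is a class of binary functions. The VC class $\mathcal F^{\mathrm{VC}}$ consists of the predictors indexed by $(g,\theta_0,\theta_1)\in\mathcal G\times[0,1]^2$ with $p_{g,\theta_0,\theta_1}(1\mid x)=\theta_{g(x)}$, $p_{g,\theta_0,\theta_1}(0\mid x)=1-\theta_{g(x)}$, and $p_{g,\theta_0,\theta_1}(y_{1:t}\mid x_{1:t})=\prod_{i\le t}p_{g,\theta_0,\theta_1}(y_i\mid x_i)$. Given $g_1,\dots,g_{m_\epsilon}\in\mathcal G$, the mixture assignment $\mathscr Q^{\mathrm{VC}}$ is defined by $q(y_{1:t}\|x_{1:t})=\frac1{m_\epsilon}\sum_{i=1}^{m_\epsilon}\int_0^1\int_0^1p_{g_i,\theta_0,\theta_1}(y_{1:t}\mid x_{1:t})\,d\theta_0\,d\theta_1$,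 with sequential predictions $q(1\mid x_{1:t},y_{1:t-1})=q(y_{1:t-1}1\|x_{1:t})/q(y_{1:t-1}\|x_{1:t-1})$, so that $q(y_{1:T}\|x_{1:T})=\prod_t q(y_t\mid x_{1:t},y_{1:t-1})$. Logarithms are natural. *)

(* Defs.v *)
From Stdlib Require Import Reals Lra Lia List.
From Coquelicot Require Import Coquelicot.
Open Scope R_scope.

(* Sequences x_{1:T}, y_{1:T} are represented by functions on indices 0..T-1. *)

(* p_{g,th0,th1}(y | x) with labels y in {0,1} encoded as bool (true = 1). *)
Definition theta_of {X : Type} (g : X -> bool) (th0 th1 : R) (x : X) : R :=
  if g x then th1 else th0.

Definition p1 {X : Type} (g : X -> bool) (th0 th1 : R) (x : X) (y : bool) : R :=
  if y then theta_of g th0 th1 x else 1 - theta_of g th0 th1 x.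

Fixpoint pseq {X : Type} (g : X -> bool) (th0 th1 : R)
    (T : nat) (x : nat -> X) (y : nat -> bool) : R :=
  match T with
  | O => 1
  | S k => pseq g th0 th1 k x y * p1 g th0 th1 (x k) (y k)
  end.

Fixpoint sumR (m : nat) (f : nat -> R) : R :=
  match m with
  | O => 0
  | S k => sumR k f + f k
  end.

Definition qVC {X : Type} (gs : nat -> (X -> bool)) (m : nat)
    (T : nat) (x : nat -> X) (y : nat -> bool) : R :=
  / INR m * sumR m (fun i =>
    RInt (fun th1 => RInt (fun th0 => pseq (gs i) th0 th1 T x y) 0 1) 0 1).

Definition hamming {X : Type} (g g' : X -> bool) (T : nat) (x : nat -> X) : nat :=
  length (filter (fun i => negb (Bool.eqb (g (x i)) (g' (x i)))) (seq 0 T)).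

(* min_{i < m} d i  (for m >= 1) *)
Definition min_idx (m : nat) (d : nat -> nat) : nat :=
  fold_right Nat.min (d 0%nat) (map d (seq 0 m)).

(* Main.v *)
Require Import Defs.
From Stdlib Require Import Reals List.
From Coquelicot Require Import Coquelicot.
From Stdlib Require Import Lra Lia Factorial.
Open Scope R_scope.

Lemma ln0 : ln 0 = 0.
Proof. unfold ln. destruct (Rlt_dec 0 0) as [h|h]. exfalso; exact (Rlt_irrefl 0 h). reflexivity. Qed.

Definition Jf (a b : nat) (t : R) := t ^ a * (1 - t) ^ b.
Definition J (a b : nat) : R := RInt (Jf a b) 0 1.

Lemma Jf_ex (a b : nat) : ex_RInt (Jf a b) 0 1.
Proof.
  apply (ex_RInt_continuous (V:=R_CompleteNormedModule)). intros z _. apply (@ex_derive_continuous R_AbsRing R_NormedModule).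
  unfold Jf. auto_derive. auto.
Qed.

Lemma J_a0 a : J a 0 = / INR (S a).
Proof.
  unfold J. rewrite (RInt_ext _ (fun t => t ^ a)).
  2:{ intros; unfold Jf; simpl; ring. }
  rewrite (is_RInt_unique _ _ _ _ (is_RInt_pow 0 1 a)).
  rewrite pow1. rewrite pow_i by lia. unfold Rdiv; rewrite Rmult_0_l, Rminus_0_r, Rmult_1_l; reflexivity.
Qed.

Lemma J_rec a b : J a b = J (S a) b + J a (S b).
Proof.
  unfold J. rewrite <- (RInt_plus (V:=R_CompleteNormedModule)) by apply Jf_ex.
  apply RInt_ext. intros. unfold Jf; simpl. change (plus ?u ?v) with (u+v). ring.
Qed.

Definition Bt (a b : nat) := INR (fact a) * INR (fact b) / INR (fact (a + b + 1)).

Lemma J_Bt b : forall a, J a b = Bt a b.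
Proof.
  induction b as [|b IH]; intros a.
  - rewrite J_a0. unfold Bt. replace (a + 0 + 1)%nat with (S a) by lia.
    rewrite fact_simpl, mult_INR. simpl (fact 0). simpl (INR 1).
    field. split; apply not_0_INR; [apply fact_neq_0|lia].
  - assert (H := J_rec a b). rewrite IH, IH in H.
    assert (E: J a (S b) = Bt a b - Bt (S a) b) by lra. rewrite E. unfold Bt.
    replace (S a + b + 1)%nat with (S (a + b + 1)) by lia.
    replace (a + S b + 1)%nat with (S (a + b + 1)) by lia.
    rewrite !fact_simpl, !mult_INR.
    replace (INR (S (a + b + 1))) with (INR (S a) + INR (S b)) by (rewrite !S_INR, !plus_INR; simpl; ring).
    field. split; [apply not_0_INR, fact_neq_0|]. rewrite !S_INR. 
    pose proof (pos_INR a); pose proof (pos_INR b); lra.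
Qed.

Lemma sum_ge_term (f : nat -> R) n k : (forall i, (i <= n)%nat -> 0 <= f i) -> (k <= n)%nat -> f k <= sum_f_R0 f n.
Proof.
  revert k; induction n as [|n IH]; intros k Hf Hk.
  - replace k with 0%nat by lia. simpl; lra.
  - simpl. destruct (Nat.eq_dec k (S n)) as [->|Hne].
    + assert (f 0%nat <= sum_f_R0 f n) by (apply IH; [intros; apply Hf; lia | lia]). assert (0 <= f 0%nat) by (apply Hf; lia). lra.
    + assert (f k <= sum_f_R0 f n) by (apply IH; [intros; apply Hf; lia | lia]).
      assert (0 <= f (S n)) by (apply Hf; lia). lra.
Qed.

Lemma J_bound a b phi : 0 <= phi <= 1 -> phi ^ a * (1 - phi) ^ b <= J a b * INR (a + b + 1).
Proof.
  intros Hp. rewrite J_Bt. unfold Bt.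
  assert (Hb := binomial phi (1 - phi) (a + b)).
  replace (phi + (1 - phi)) with 1 in Hb by ring. rewrite pow1 in Hb.
  assert (Ht : Binomial.C (a + b) a * phi ^ a * (1 - phi) ^ (a + b - a) <= 1).
  { rewrite Hb at 2. apply (sum_ge_term (fun i => Binomial.C (a + b) i * phi ^ i * (1 - phi) ^ (a + b - i))).
    - intros i Hi. apply Rmult_le_pos. apply Rmult_le_pos.
      + unfold Binomial.C. apply Rmult_le_pos. apply pos_INR. apply Rlt_le, Rinv_0_lt_compat.
        rewrite <- mult_INR. apply lt_0_INR. pose proof (lt_O_fact i); pose proof (lt_O_fact (a+b-i)). lia.
      + apply pow_le; lra.
      + apply pow_le; lra.
    - lia. }
  replace (a + b - a)%nat with b in Ht by lia. unfold Binomial.C in Ht.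
  replace (a + b - a)%nat with b in Ht by lia.
  replace (a + b + 1)%nat with (S (a + b)) by lia. rewrite fact_simpl, mult_INR.
  assert (0 < INR (fact a)) by (apply lt_0_INR, lt_O_fact).
  assert (0 < INR (fact b)) by (apply lt_0_INR, lt_O_fact).
  assert (0 < INR (fact (a+b))) by (apply lt_0_INR, lt_O_fact).
  assert (0 < INR (S (a+b))) by (apply lt_0_INR; lia).
  replace (INR (fact a) * INR (fact b) / (INR (S (a + b)) * INR (fact (a + b))) * INR (S (a + b)))
    with (/ (INR (fact (a + b)) / (INR (fact a) * INR (fact b)))) by (field; lra).
  set (Cc := INR (fact (a + b)) / (INR (fact a) * INR (fact b))) in *.
  assert (0 < Cc) by (unfold Cc; apply Rdiv_lt_0_compat; nra).
  apply (Rmult_le_reg_l Cc). lra. rewrite Rinv_r by lra. lra.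
Qed.

Fixpoint cnt {X : Type} (g : X -> bool) (v yb : bool) (T : nat) (x : nat -> X) (y : nat -> bool) : nat :=
  match T with
  | O => O
  | S k => (cnt g v yb k x y + if andb (Bool.eqb (g (x k)) v) (Bool.eqb (y k) yb) then 1 else 0)%nat
  end.

Lemma pseq_form {X : Type} (g : X -> bool) th0 th1 T x y :
  pseq g th0 th1 T x y =
  Jf (cnt g false true T x y) (cnt g false false T x y) th0 *
  Jf (cnt g true true T x y) (cnt g true false T x y) th1.
Proof.
  unfold Jf. induction T as [|k IH]; simpl. ring.
  rewrite IH. unfold p1, theta_of.
  destruct (g (x k)), (y k); simpl; rewrite ?Nat.add_0_r, ?Nat.add_1_r; simpl; ring.
Qed.

Lemma cnt_sum {X : Type} (g : X -> bool) T x y :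
  (cnt g false true T x y + cnt g false false T x y + (cnt g true true T x y + cnt g true false T x y) = T)%nat.
Proof.
  induction T as [|k IH]; simpl. lia.
  destruct (g (x k)), (y k); simpl; lia.
Qed.

Lemma dbl_int {X : Type} (g : X -> bool) T x y :
  RInt (fun th1 => RInt (fun th0 => pseq g th0 th1 T x y) 0 1) 0 1 =
  J (cnt g false true T x y) (cnt g false false T x y) *
  J (cnt g true true T x y) (cnt g true false T x y).
Proof.
  set (a0 := cnt g false true T x y). set (b0 := cnt g false false T x y).
  set (a1 := cnt g true true T x y). set (b1 := cnt g true false T x y).
  rewrite (RInt_ext _ (fun th1 => scal (J a0 b0) (Jf a1 b1 th1))).
  - rewrite (RInt_scal (V:=R_CompleteNormedModule)) by apply Jf_ex. reflexivity.
  - intros th1 _. 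
    rewrite (RInt_ext _ (fun th0 => scal (Jf a1 b1 th1) (Jf a0 b0 th0))).
    + rewrite (RInt_scal (V:=R_CompleteNormedModule)) by apply Jf_ex.
      change (scal ?u ?v) with (u * v). unfold J. apply Rmult_comm.
    + intros th0 _. rewrite pseq_form. change (scal ?u ?v) with (u * v). fold a0 b0 a1 b1. apply Rmult_comm.
Qed.

Lemma hamming_S {X : Type} (g g' : X -> bool) T x :
  hamming g g' (S T) x = (hamming g g' T x + if negb (Bool.eqb (g (x T)) (g' (x T))) then 1 else 0)%nat.
Proof.
  unfold hamming. rewrite seq_S, filter_app, length_app. simpl.
  destruct (negb (Bool.eqb (g (x T)) (g' (x T)))); reflexivity.
Qed.

Lemma p1_nonneg {X : Type} (g : X -> bool) th0 th1 z yb :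
  0 <= th0 <= 1 -> 0 <= th1 <= 1 -> 0 <= p1 g th0 th1 z yb.
Proof. intros. unfold p1, theta_of. destruct (g z), yb; lra. Qed.

Lemma pseq_nonneg {X : Type} (g : X -> bool) th0 th1 T x y :
  0 <= th0 <= 1 -> 0 <= th1 <= 1 -> 0 <= pseq g th0 th1 T x y.
Proof.
  intros. induction T; simpl. lra. apply Rmult_le_pos; auto. apply p1_nonneg; auto.
Qed.

Lemma ham_bound {X : Type} (g gi : X -> bool) th0 th1 ph0 ph1 al be T x y :
  0 <= al <= 1 -> 0 <= be ->
  0 <= th0 <= 1 -> 0 <= th1 <= 1 -> 0 <= ph0 <= 1 -> 0 <= ph1 <= 1 ->
  (forall t, g (x t) = gi (x t) -> al * p1 g th0 th1 (x t) (y t) <= p1 gi ph0 ph1 (x t) (y t)) ->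
  (forall t, g (x t) <> gi (x t) -> be * p1 g th0 th1 (x t) (y t) <= p1 gi ph0 ph1 (x t) (y t)) ->
  al ^ T * be ^ (hamming g gi T x) * pseq g th0 th1 T x y <= pseq gi ph0 ph1 T x y.
Proof.
  intros Hal Hbe H0 H1 H2 H3 Ha Hd. induction T as [|k IH].
  - unfold hamming; simpl. lra.
  - rewrite hamming_S. simpl pseq. simpl pow.
    assert (Pk := pseq_nonneg g th0 th1 k x y H0 H1).
    assert (pk := p1_nonneg g th0 th1 (x k) (y k) H0 H1).
    assert (Qk := pseq_nonneg gi ph0 ph1 k x y H2 H3).
    assert (0 <= al ^ k) by (apply pow_le; lra).
    assert (0 <= be ^ hamming g gi k x) by (apply pow_le; lra).
    destruct (Bool.bool_dec (g (x k)) (gi (x k))) as [E|E].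
    + rewrite E, Bool.eqb_reflx. simpl negb. rewrite Nat.add_0_r.
      specialize (Ha k E).
      replace (al * al ^ k * be ^ hamming g gi k x * (pseq g th0 th1 k x y * p1 g th0 th1 (x k) (y k)))
        with ((al ^ k * be ^ hamming g gi k x * pseq g th0 th1 k x y) * (al * p1 g th0 th1 (x k) (y k))) by ring.
      apply Rmult_le_compat; auto. apply Rmult_le_pos; [apply Rmult_le_pos|]; auto.
      apply Rmult_le_pos; lra.
    + assert (Bool.eqb (g (x k)) (gi (x k)) = false) as ->.
      { destruct (g (x k)), (gi (x k)); simpl; congruence. }
      simpl negb. rewrite pow_add. simpl pow.
      specialize (Hd k E).
      replace (al * al ^ k * (be ^ hamming g gi k x * (be * 1)) * (pseq g th0 th1 k x y * p1 g th0 th1 (x k) (y k)))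
        with (al * ((al ^ k * be ^ hamming g gi k x * pseq g th0 th1 k x y) * (be * p1 g th0 th1 (x k) (y k)))) by ring.
      assert (0 <= al ^ k * be ^ hamming g gi k x * pseq g th0 th1 k x y) by (apply Rmult_le_pos; [apply Rmult_le_pos|]; auto).
      assert (0 <= be * p1 g th0 th1 (x k) (y k)) by (apply Rmult_le_pos; lra).
      assert ((al ^ k * be ^ hamming g gi k x * pseq g th0 th1 k x y) * (be * p1 g th0 th1 (x k) (y k))
              <= pseq gi ph0 ph1 k x y * p1 gi ph0 ph1 (x k) (y k)) by (apply Rmult_le_compat; auto).
      eapply Rle_trans; [|exact H7].
      set (S := al ^ k * be ^ hamming g gi k x * pseq g th0 th1 k x y * (be * p1 g th0 th1 (x k) (y k))) in *.
      assert (0 <= S) by (apply Rmult_le_pos; auto). nra.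
Qed.

Lemma pos_agree {X : Type} (g gi : X -> bool) th0 th1 e z yb :
  0 <= e <= 1 -> 0 <= th0 <= 1 -> 0 <= th1 <= 1 -> g z = gi z ->
  (1 - e) * p1 g th0 th1 z yb <= p1 gi ((1-e)*th0 + e/2) ((1-e)*th1 + e/2) z yb.
Proof.
  intros He H0 H1 E. unfold p1, theta_of. rewrite <- E. destruct (g z), yb; nra.
Qed.

Lemma pos_differ {X : Type} (g gi : X -> bool) th0 th1 e z yb :
  0 <= e <= 1 -> 0 <= th0 <= 1 -> 0 <= th1 <= 1 -> g z <> gi z ->
  e / 2 * p1 g th0 th1 z yb <= p1 gi ((1-e)*th0 + e/2) ((1-e)*th1 + e/2) z yb.
Proof.
  intros He H0 H1 E. unfold p1, theta_of. destruct (g z), (gi z); try congruence; destruct yb; nra.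
Qed.

Lemma bernoulli e n : 0 <= e <= 1 -> 1 - INR n * e <= (1 - e) ^ n.
Proof.
  intros He. induction n as [|n IH]. simpl. lra.
  rewrite S_INR. simpl pow. assert (0 <= INR n) by apply pos_INR.
  assert ((1 - e) * (1 - INR n * e) <= (1 - e) * (1 - e) ^ n) by (apply Rmult_le_compat_l; lra).
  nra.
Qed.

Lemma nat_bound T d : (2 <= T)%nat -> (1 <= d)%nat -> (2 * (4 * T) ^ d <= T ^ (32 * d))%nat.
Proof.
  intros HT Hd. rewrite Nat.pow_mul_l.
  assert (A1 : (4 ^ d <= T ^ (2 * d))%nat).
  { rewrite Nat.pow_mul_r. apply Nat.pow_le_mono_l. simpl. nia. }
  assert (A2 : (2 <= T ^ d)%nat).
  { apply Nat.le_trans with T; auto. replace T with (T ^ 1)%nat at 1 by apply Nat.pow_1_r.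
    apply Nat.pow_le_mono_r; lia. }
  assert (A3 : (T ^ (32 * d) = T ^ d * T ^ (2 * d) * T ^ d * T ^ (28 * d))%nat).
  { rewrite <- !Nat.pow_add_r. f_equal. lia. }
  assert (A4 : (1 <= T ^ (28 * d))%nat).
  { apply Nat.le_trans with (1 ^ (28 * d))%nat. rewrite Nat.pow_1_l; lia. apply Nat.pow_le_mono_l; lia. }
  rewrite A3. revert A1 A2 A4. generalize (4 ^ d)%nat (T ^ d)%nat (T ^ (2 * d))%nat (T ^ (28 * d))%nat.
  intros F a b c A1 A2 A4.
  assert (2 * (F * a) <= a * b * a)%nat by nia. nia.
Qed.

Lemma sumR_ge (f : nat -> R) m i : (forall j, (j < m)%nat -> 0 <= f j) -> (i < m)%nat -> f i <= sumR m f.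
Proof.
  induction m as [|m IH]; intros Hf Hi. lia. simpl.
  destruct (Nat.eq_dec i m) as [->|Hne].
  - assert (0 <= sumR m f).
    { clear IH Hi. induction m; simpl. lra. assert (0 <= f m) by (apply Hf; lia).
      assert (0 <= sumR m f) by (apply IHm; intros; apply Hf; lia). lra. }
    lra.
  - assert (f i <= sumR m f) by (apply IH; [intros; apply Hf; lia|lia]).
    assert (0 <= f m) by (apply Hf; lia). lra.
Qed.

Lemma min_idx_attained (m : nat) (d : nat -> nat) : (0 < m)%nat -> exists i, (i < m)%nat /\ min_idx m d = d i.
Proof.
  intros Hm. unfold min_idx.
  assert (G : forall l, fold_right Nat.min (d 0%nat) (map d l) = d 0%nat \/
                   exists i, In i l /\ fold_right Nat.min (d 0%nat) (map d l) = d i).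
  { induction l as [|j l IH]; simpl. auto.
    destruct (Nat.min_spec (d j) (fold_right Nat.min (d 0%nat) (map d l))) as [[_ E]|[_ E]]; rewrite E.
    - right. exists j. auto.
    - destruct IH as [IH|[i [Hi IH]]]; auto. right. exists i. auto. }
  destruct (G (seq 0 m)) as [E|[i [Hi E]]].
  - exists 0%nat. auto.
  - exists i. split; auto. apply in_seq in Hi. lia.
Qed.

Lemma J_pos a b : 0 < J a b.
Proof.
  rewrite J_Bt. unfold Bt. apply Rdiv_lt_0_compat.
  apply Rmult_lt_0_compat; apply lt_0_INR, Factorial.lt_O_fact. apply lt_0_INR, Factorial.lt_O_fact.
Qed.

Lemma Jf_nonneg a b t : 0 <= t <= 1 -> 0 <= Jf a b t.
Proof. intros. unfold Jf. apply Rmult_le_pos; apply pow_le; lra. Qed.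

Theorem mainTheorem10 (X : Type) (G : (X -> bool) -> Prop)
  (m : nat) (gs : nat -> (X -> bool))
  (Hm : (0 < m)%nat) (HgsG : forall i, (i < m)%nat -> G (gs i))
  (T : nat) (HT : (2 <= T)%nat)
  (x : nat -> X) (y : nat -> bool)
  (gstar : X -> bool) (Hgstar : G gstar)
  (th0 th1 : R) (Hth0 : 0 <= th0 <= 1) (Hth1 : 0 <= th1 <= 1) :
  ln (pseq gstar th0 th1 T x y / qVC gs m T x y)
  <= ln (INR m) + 2 * ln (INR T)
     + 32 * INR (min_idx m (fun i => hamming gstar (gs i) T x)) * ln (INR T).
Proof.
  destruct (min_idx_attained m (fun i => hamming gstar (gs i) T x) Hm) as [i [Hi Hd]].
  set (d := min_idx m (fun i => hamming gstar (gs i) T x)) in *.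
  cbv beta in Hd.
  set (F := fun i => RInt (fun th1 => RInt (fun th0 => pseq (gs i) th0 th1 T x y) 0 1) 0 1).
  assert (FJ : forall j, F j = J (cnt (gs j) false true T x y) (cnt (gs j) false false T x y) *
                           J (cnt (gs j) true true T x y) (cnt (gs j) true false T x y))
    by (intros; unfold F; apply dbl_int).
  assert (Fpos : forall j, 0 < F j) by (intros; rewrite FJ; apply Rmult_lt_0_compat; apply J_pos).
  assert (HQ : qVC gs m T x y = / INR m * sumR m F) by reflexivity.
  assert (Hm' : 0 < INR m) by (apply lt_0_INR; lia).
  assert (HT' : 2 <= INR T) by (apply (le_INR 2); lia).
  assert (Fi : F i <= sumR m F) by (apply sumR_ge; auto; intros; apply Rlt_le, Fpos).
  assert (Qpos : 0 < qVC gs m T x y).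
  { rewrite HQ. apply Rmult_lt_0_compat. apply Rinv_0_lt_compat; lra. specialize (Fpos i). lra. }
  set (eps := if Nat.eq_dec d 0 then 0 else / (2 * INR T)).
  assert (Heps : 0 <= eps <= 1).
  { unfold eps. destruct (Nat.eq_dec d 0). lra. split. apply Rlt_le, Rinv_0_lt_compat; lra.
    rewrite <- Rinv_1. apply Rinv_le_contravar; lra. }
  set (ph0 := (1 - eps) * th0 + eps / 2). set (ph1 := (1 - eps) * th1 + eps / 2).
  assert (Hph0 : 0 <= ph0 <= 1) by (unfold ph0; nra).
  assert (Hph1 : 0 <= ph1 <= 1) by (unfold ph1; nra).
  set (P := pseq gstar th0 th1 T x y).
  set (P' := pseq (gs i) ph0 ph1 T x y).
  assert (H1 : (1 - eps) ^ T * (eps / 2) ^ d * P <= P').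
  { rewrite Hd. apply ham_bound; try lra.
    - intros t E. apply pos_agree; auto.
    - intros t E. apply pos_differ; auto. }
  assert (H2 : P' <= INR (T ^ 2) * F i).
  { unfold P'. rewrite pseq_form, FJ.
    set (a0 := cnt (gs i) false true T x y). set (b0 := cnt (gs i) false false T x y).
    set (a1 := cnt (gs i) true true T x y). set (b1 := cnt (gs i) true false T x y).
    assert (Hs := cnt_sum (gs i) T x y). fold a0 b0 a1 b1 in Hs.
    assert (B0 := J_bound a0 b0 ph0 Hph0). assert (B1 := J_bound a1 b1 ph1 Hph1).
    fold (Jf a0 b0 ph0) in B0. fold (Jf a1 b1 ph1) in B1.
    assert (Hn : (INR (a0 + b0 + 1) * INR (a1 + b1 + 1) <= INR (T ^ 2))%R).
    { rewrite <- mult_INR. apply le_INR. simpl. nia. }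
    assert (0 <= Jf a0 b0 ph0) by (apply Jf_nonneg; auto).
    assert (0 <= Jf a1 b1 ph1) by (apply Jf_nonneg; auto).
    assert (0 < J a0 b0) by apply J_pos. assert (0 < J a1 b1) by apply J_pos.
    apply Rle_trans with ((J a0 b0 * INR (a0 + b0 + 1)) * (J a1 b1 * INR (a1 + b1 + 1))).
    apply Rmult_le_compat; auto.
    replace (J a0 b0 * INR (a0 + b0 + 1) * (J a1 b1 * INR (a1 + b1 + 1)))
      with ((J a0 b0 * J a1 b1) * (INR (a0 + b0 + 1) * INR (a1 + b1 + 1))) by ring.
    rewrite (Rmult_comm (INR (T ^ 2))). apply Rmult_le_compat_l; auto.
    apply Rlt_le, Rmult_lt_0_compat; auto. }
  assert (H3 : 1 <= (1 - eps) ^ T * (eps / 2) ^ d * INR (T ^ (32 * d))).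
  { unfold eps. destruct (Nat.eq_dec d 0) as [E|E].
    - rewrite E. replace (1 - 0) with 1 by ring. rewrite pow1, Nat.mul_0_r. simpl. lra.
    - assert (He : 0 <= / (2 * INR T) <= 1).
      { split. apply Rlt_le, Rinv_0_lt_compat; lra. rewrite <- Rinv_1. apply Rinv_le_contravar; lra. }
      assert (Hb := bernoulli (/ (2 * INR T)) T He).
      replace (INR T * / (2 * INR T)) with (/2) in Hb by (field; lra).
      replace (/ (2 * INR T) / 2) with (/ INR (4 * T)) by (rewrite mult_INR; simpl; field; lra).
      rewrite pow_inv, <- pow_INR.
      assert (Hn := nat_bound T d HT ltac:(lia)).
      apply le_INR in Hn. rewrite mult_INR in Hn. simpl (INR 2) in Hn.
      assert (0 < INR ((4 * T) ^ d)) by (apply lt_0_INR, Nat.neq_0_lt_0, Nat.pow_nonzero; lia).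
      set (A := INR ((4 * T) ^ d)) in *. set (K := INR (T ^ (32 * d))) in *.
      set (B := (1 - / (2 * INR T)) ^ T) in *.
      replace (B * / A * K) with (B * (K / A)) by (field; lra).
      assert (2 <= K / A). { apply Rmult_le_reg_r with A; auto. unfold Rdiv. rewrite Rmult_assoc, Rinv_l; lra. }
      nra. }
  assert (HP : 0 <= P) by (apply pseq_nonneg; auto).
  set (c := (1 - eps) ^ T * (eps / 2) ^ d) in *.
  set (K := INR (T ^ (32 * d))) in *.
  assert (HK : 0 <= K) by apply pos_INR.
  assert (HT2 : 0 <= INR (T ^ 2)) by apply pos_INR.
  assert (S1 : P <= K * P').
  { apply Rle_trans with ((c * K) * P). nra.
    replace (c * K * P) with (K * (c * P)) by ring. apply Rmult_le_compat_l; auto. }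
  assert (S2 : P <= K * INR (T ^ 2) * INR m * qVC gs m T x y).
  { rewrite HQ. replace (K * INR (T ^ 2) * INR m * (/ INR m * sumR m F)) with (K * INR (T ^ 2) * sumR m F)
      by (field; lra).
    apply Rle_trans with (K * P'); auto. rewrite Rmult_assoc. apply Rmult_le_compat_l; auto.
    apply Rle_trans with (INR (T ^ 2) * F i); auto. apply Rmult_le_compat_l; auto. }
  assert (HTp : 0 < INR T) by lra.
  assert (EM : K * INR (T ^ 2) * INR m = INR m * INR T ^ (2 + 32 * d)).
  { unfold K. rewrite !pow_INR, pow_add. ring. }
  rewrite EM in S2.
  assert (HMpos : 0 < INR m * INR T ^ (2 + 32 * d)) by (apply Rmult_lt_0_compat; auto; apply pow_lt; auto).
  assert (Hlnm : 0 <= ln (INR m)).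
  { rewrite <- ln_1. destruct (Rle_lt_or_eq_dec 1 (INR m)) as [h|h].
    apply (le_INR 1); lia. apply Rlt_le, ln_increasing; lra. rewrite h; lra. }
  assert (HlnT : 0 < ln (INR T)) by (rewrite <- ln_1; apply ln_increasing; lra).
  assert (Hd0 : 0 <= INR d) by apply pos_INR.
  assert (Rhs : ln (INR m * INR T ^ (2 + 32 * d)) = ln (INR m) + 2 * ln (INR T) + 32 * INR d * ln (INR T)).
  { rewrite ln_mult by (auto; apply pow_lt; auto). rewrite ln_pow by auto.
    rewrite plus_INR, mult_INR. simpl (INR 2). simpl (INR 32). ring. }
  fold P. rewrite <- Rhs.
  destruct (Rle_lt_or_eq_dec 0 P HP) as [Pp|P0].
  - apply ln_le. apply Rdiv_lt_0_compat; auto.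
    apply Rmult_le_reg_r with (qVC gs m T x y); auto. unfold Rdiv. rewrite Rmult_assoc, Rinv_l; lra.
  - rewrite <- P0. unfold Rdiv. rewrite Rmult_0_l, ln0. rewrite Rhs. nra.
Qed.
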